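(* Let $G$ be a commutative group and $f_1,f_2$ bijections of $G$ such that $G(f_1)$ and $G(f_2)$ are not groups. Then $G(f_1)\cong G(f_2)$ if and only if there is $\psi\in\mathrm{Aut}(G)$ such that $$f_2^{-1}\psi f_1(x)=f_2^{-1}\psi f_1(1)\cdot\psi(x)\quad\text{for all }x\in G,$$ and $f_2^{-1}\psi f_1(1)$ is a square in $G$.
   Context: Construction $G(f)$: for a commutative group $G$ (written multiplicatively) and a bijection $f:G\to G$, let $\overline{G}=\{\overline{x}:x\in G\}$ be a disjoint copy of $G$, and let $G(f)$ be the set $G\cup\overline{G}$ with multiplication $*$ defined for $x,y\in G$ by $x*y=xy$, $x*\overline{y}=\overline{xy}$, $\overline{x}*y=\overline{xy}$, $\overline{x}*\overline{y}=f(xy)$. It is a commutative loop (a set with a binary operation, neutral element $1$, and bijective left and right translations). *)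

(* Defs.v *)
Set Implicit Arguments.

Record ComGroup := {
  carrier :> Type;
  gmul : carrier -> carrier -> carrier;
  gone : carrier;
  ginv : carrier -> carrier;
  gmulA : forall x y z, gmul x (gmul y z) = gmul (gmul x y) z;
  gmulC : forall x y, gmul x y = gmul y x;
  gmul1 : forall x, gmul gone x = x;
  gmulV : forall x, gmul (ginv x) x = gone
}.

Definition is_inverse (A : Type) (f finv : A -> A) : Prop :=
  (forall x, finv (f x) = x) /\ (forall y, f (finv y) = y).

Definition is_aut {G : ComGroup} (psi : G -> G) : Prop :=
  (exists psi', is_inverse psi psi') /\
  (forall x y, psi (gmul G x y) = gmul G (psi x) (psi y)).

Definition is_square {G : ComGroup} (x : G) : Prop :=
  exists y : G, x = gmul G y y.

(* The loop G(f): carrier G + G, where inl x = x and inr x = \bar x. *)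
Definition Gf_carrier (G : ComGroup) : Type := (G + G)%type.

Definition Gf_mul {G : ComGroup} (f : G -> G) (a b : Gf_carrier G) : Gf_carrier G :=
  match a, b with
  | inl x, inl y => inl (gmul G x y)
  | inl x, inr y => inr (gmul G x y)
  | inr x, inl y => inr (gmul G x y)
  | inr x, inr y => inl (f (gmul G x y))
  end.

Definition is_group (S : Type) (op : S -> S -> S) : Prop :=
  exists e : S,
    (forall x, op e x = x /\ op x e = x) /\
    (forall x y z, op x (op y z) = op (op x y) z) /\
    (forall x, exists y, op x y = e /\ op y x = e).

Definition magma_iso (S1 S2 : Type) (op1 : S1 -> S1 -> S1) (op2 : S2 -> S2 -> S2) : Prop :=
  exists (phi : S1 -> S2) (phi' : S2 -> S1),
    (forall x, phi' (phi x) = x) /\ (forall y, phi (phi' y) = y) /\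
    (forall a b, phi (op1 a b) = op2 (phi a) (phi b)).

(* Main.v *)
Require Import Defs.
From Stdlib Require Import Setoid.

Section Aux.
Variable G : ComGroup.
Local Notation "x ** y" := (gmul G x y) (at level 40, left associativity).
Local Notation "1" := (gone G).

Lemma mulCA (x y z : G) : x ** (y ** z) = y ** (x ** z).
Proof. rewrite gmulA, (gmulC _ x y), <- gmulA. reflexivity. Qed.

Lemma mul1r (x : G) : x ** 1 = x.
Proof. rewrite gmulC; apply gmul1. Qed.

Lemma mulVr (x : G) : x ** ginv G x = 1.
Proof. rewrite gmulC; apply gmulV. Qed.

Lemma mulK (x z : G) : x ** (ginv G x ** z) = z.
Proof. rewrite gmulA, mulVr, gmul1. reflexivity. Qed.

Lemma mulKV (x z : G) : ginv G x ** (x ** z) = z.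
Proof. rewrite gmulA, gmulV, gmul1. reflexivity. Qed.

Lemma idem1 (x : G) : x ** x = x -> x = 1.
Proof. intro H. rewrite <- (mulKV x x), H, gmulV. reflexivity. Qed.

Lemma group_of (f f' : G -> G) (hf : is_inverse f f')
  (Hf : forall u v, f (u ** v) = u ** f v) : is_group (Gf_mul f).
Proof.
  destruct hf as [hf1 hf2].
  exists (inl 1). split; [|split].
  - intros [x|x]; simpl; rewrite gmul1, mul1r; auto.
  - intros [x|x] [y|y] [z|z]; simpl; try (now rewrite gmulA); f_equal.
    + rewrite <- gmulA; symmetry; apply Hf.
    + rewrite (gmulC _ (f (x ** y)) z), <- (Hf z). f_equal.
      rewrite (gmulC _ z), <- gmulA. reflexivity.
    + rewrite (gmulC _ (f (x ** y)) z), <- (Hf z), <- (Hf x). f_equal.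
      rewrite (gmulC _ z), <- gmulA. reflexivity.
  - intros [x|x].
    + exists (inl (ginv G x)); simpl; rewrite mulVr, gmulV; auto.
    + exists (inr (ginv G x ** f' 1)); simpl.
      rewrite mulK, (gmulC _ (ginv G x ** f' 1) x), mulK, hf2; auto.
Qed.

Definition Pl (S : Type) (op : S -> S -> S) (a : S) :=
  forall b, op (op a a) b = op a (op a b).
Arguments Pl {S}.

Lemma P_inl (f : G -> G) x : Pl (Gf_mul f) (inl x).
Proof. intros [y|y]; simpl; f_equal; rewrite gmulA; reflexivity. Qed.

Lemma P_inr (f f' : G -> G) (hf : is_inverse f f') (hng : ~ is_group (Gf_mul f)) x :
  ~ Pl (Gf_mul f) (inr x).
Proof.
  intro H. apply hng. apply (group_of f f' hf). intros u v.
  assert (Hx : forall y, f (x ** x) ** y = x ** f (x ** y)).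
  { intro y. specialize (H (inr y)). simpl in H. injection H. auto. }
  assert (Fx : forall w, f w = ginv G x ** (f (x ** x) ** (ginv G x ** w))).
  { intro w. rewrite Hx, mulKV, mulK. reflexivity. }
  rewrite (Fx (u ** v)), (Fx v).
  set (F := f (x ** x)).
  rewrite (mulCA u (ginv G x)), (mulCA u F), (mulCA u (ginv G x) v). reflexivity.
Qed.

Definition proj (s : Gf_carrier G) : G := match s with inl y => y | inr y => y end.

End Aux.
Arguments Pl {S}. Arguments mulCA {G}. Arguments mul1r {G}. Arguments mulVr {G}. Arguments mulK {G}. Arguments mulKV {G}. Arguments idem1 {G}. Arguments P_inl {G}. Arguments P_inr {G f f'}. Arguments proj {G}.

Theorem proposition2p5 (G : ComGroup) (f1 f1' f2 f2' : G -> G)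
  (hf1 : is_inverse f1 f1') (hf2 : is_inverse f2 f2')
  (hng1 : ~ is_group (Gf_mul f1)) (hng2 : ~ is_group (Gf_mul f2)) :
  magma_iso (Gf_mul f1) (Gf_mul f2) <->
  exists psi : G -> G,
    is_aut psi /\
    (forall x : G,
       f2' (psi (f1 x)) = gmul G (f2' (psi (f1 (gone G)))) (psi x)) /\
    is_square (f2' (psi (f1 (gone G)))).
Proof.
  split.
  - intros [phi [phi' [H1 [H2 Hm]]]].
    assert (Hm' : forall x y, phi' (Gf_mul f2 x y) = Gf_mul f1 (phi' x) (phi' y)).
    { intros x y. rewrite <- (H2 x), <- (H2 y), <- Hm, !H1. reflexivity. }
    assert (T1 : forall a, Pl (Gf_mul f1) a -> Pl (Gf_mul f2) (phi a)).
    { intros a HP b. rewrite <- (H2 b), <- !Hm, HP. reflexivity. }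
    assert (T2 : forall a, Pl (Gf_mul f2) a -> Pl (Gf_mul f1) (phi' a)).
    { intros a HP b. rewrite <- (H1 b), <- !Hm', HP. reflexivity. }
    assert (El : forall x, phi (inl x) = inl (proj (phi (inl x)))).
    { intro x. pose proof (T1 _ (P_inl f1 x)) as P.
      destruct (phi (inl x)) as [y|y]; [reflexivity|].
      exfalso; exact (P_inr hf2 hng2 _ P). }
    assert (Er : forall x, phi (inr x) = inr (proj (phi (inr x)))).
    { intro x. destruct (phi (inr x)) as [y|y] eqn:E; [|reflexivity].
      exfalso. pose proof (T2 _ (P_inl f2 y)) as P.
      rewrite <- E, H1 in P. exact (P_inr hf1 hng1 _ P). }
    assert (El' : forall x, phi' (inl x) = inl (proj (phi' (inl x)))).
    { intro x. destruct (phi' (inl x)) as [y|y] eqn:E; [reflexivity|].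
      exfalso. pose proof (T2 _ (P_inl f2 x)) as P.
      rewrite E in P. exact (P_inr hf1 hng1 _ P). }
    set (psi := fun x => proj (phi (inl x))).
    set (a := proj (phi (inr (gone G)))).
    assert (hom : forall x y, psi (gmul G x y) = gmul G (psi x) (psi y)).
    { intros x y. unfold psi.
      change (inl (gmul G x y)) with (Gf_mul f1 (inl x) (inl y)).
      rewrite Hm, (El x), (El y). reflexivity. }
    assert (psi1 : psi (gone G) = gone G).
    { apply idem1. rewrite <- hom, gmul1. reflexivity. }
    assert (Hg : forall x, proj (phi (inr x)) = gmul G (psi x) a).
    { intro x. rewrite <- (mul1r x) at 1.
      change (inr (gmul G x (gone G))) with (Gf_mul f1 (inl x) (inr (gone G))).
      rewrite Hm, (El x), (Er (gone G)). reflexivity. }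
    assert (Hf : forall z, f2' (psi (f1 z)) = gmul G (gmul G a a) (psi z)).
    { intro z. unfold psi at 1.
      rewrite <- (mul1r z) at 1.
      change (inl (f1 (gmul G z (gone G)))) with (Gf_mul f1 (inr z) (inr (gone G))).
      rewrite Hm, (Er z), (Er (gone G)). simpl. rewrite (proj1 hf2), !Hg, psi1, gmul1.
      rewrite <- gmulA; apply gmulC. }
    exists psi. split; [|split].
    + split; [|exact hom].
      exists (fun y => proj (phi' (inl y))). split.
      * intro x. unfold psi. rewrite <- El, H1. reflexivity.
      * intro y. unfold psi. rewrite <- El', H2. reflexivity.
    + intro x. rewrite !Hf, psi1, mul1r. reflexivity.
    + exists a. rewrite Hf, psi1, mul1r. reflexivity.
  - intros [psi [[[psi' [Hp1 Hp2]] hom] [Hf [a Ha]]]].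
    set (c := f2' (psi (f1 (gone G)))) in *.
    exists (fun s => match s with inl x => inl (psi x) | inr x => inr (gmul G a (psi x)) end).
    exists (fun s => match s with inl y => inl (psi' y) | inr y => inr (psi' (gmul G (ginv G a) y)) end).
    split; [|split].
    + intros [x|x]; simpl; rewrite ?mulKV, Hp1; reflexivity.
    + intros [y|y]; simpl; rewrite Hp2, ?mulK; reflexivity.
    + intros [x|x] [y|y]; simpl; f_equal; rewrite ?hom.
      * reflexivity.
      * apply mulCA.
      * apply gmulA.
      * assert (E : forall z, psi (f1 z) = f2 (gmul G c (psi z))).
        { intro z. rewrite <- Hf, (proj2 hf2). reflexivity. }
        rewrite E, hom, Ha. f_equal.
        rewrite <- !gmulA. f_equal. apply mulCA.
Qed.
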